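(* Consider the ESBAS meta-algorithm $\sigma^{\textsc{esbas}}$ described in the context, run with a stochastic $K$-armed bandit $\Xi$ that guarantees a pseudo-regret of order $\mathcal{O}(\log(T)/\Delta^\dag_\beta)$. If $\Delta_\beta^\dag\in\Theta\left(\beta^{-m^\dag}\right)$ for some $m^\dag>0$, then $$\overline{\rho}_{ss}^{\sigma^{\textsc{esbas}}}(T)\in\mathcal{O}\left(\log^{m^\dag+2}(T)\right).$$
   Context: Setting. An agent interacts episodically with a fixed stochastic environment (actions in $\mathcal{A}$, observations in $\Omega$, rewards in $[R_{min},R_{max}]$). A trajectory is a finite sequence of (observation, action, reward) triples, with return $\mu(\varepsilon)=\sum_{t=1}^{|\varepsilon|}\gamma^{t-1}r(t)$ for a discount $0\le\gamma<1$. An RL algorithm maps a trajectory set $\mathcal{D}$ to a policy $\pi^\alpha_{\mathcal{D}}$; $\mathbb{E}\mu^\alpha_{\mathcal{D}}$ is the expected return of a trajectory generated by $\pi^\alpha_{\mathcal{D}}$. A portfolio is $\mathcal{P}=\{\alpha^k\}_{k=1}^K$. A meta-algorithm $\sigma$ selects at each meta-time $\tau=1,2,\dots$ an algorithm $\sigma(\tau)\in\mathcal{P}$; a trajectory is generated with the policy currently associated with $\sigma(\tau)$ and added to the shared trajectory set ($\mathcal{D}_0=\emptyset$, $\mathcal{D}_\tau=\mathcal{D}_{\tau-1}\cup\{\varepsilon_\tau\}$); $\mathcal{D}^\sigma_\tau$ and $\mathbb{E}_\sigma$ denote the resulting random trajectory set and expectation. ESBAS: epoch $\beta=0,1,\dots$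 consists of meta-times $2^\beta,\dots,2^{\beta+1}-1$. At the start of epoch $\beta$ each algorithm computes $\pi^\alpha_{\mathcal{D}_{2^\beta-1}}$, frozen for the epoch, and a fresh instance of $\Xi$ (arms = algorithms) is started; during the epoch $\Xi$ chooses which algorithm's frozen policy generates each trajectory, receiving its return as reward. Short-sighted pseudo-regret: $\overline{\rho}^\sigma_{ss}(T)=\mathbb{E}_\sigma\left[\sum_{\tau=1}^T\left(\max_{\alpha\in\mathcal{P}}\mathbb{E}\mu^\alpha_{\mathcal{D}^\sigma_{\tau-1}}-\mathbb{E}\mu^{\sigma(\tau)}_{\mathcal{D}^\sigma_{\tau-1}}\right)\right]$. Gaps: $\Delta^\alpha_\beta=\max_{\alpha'}\mathbb{E}\mu^{\alpha'}_{\mathcal{D}^{\sigma^{\textsc{esbas}}}_{2^\beta-1}}-\mathbb{E}\mu^{\alpha}_{\mathcal{D}^{\sigma^{\textsc{esbas}}}_{2^\beta-1}}$; $\Delta^\dag_\beta$ is the smallest non-null gap at epoch $\beta$. *)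

(* Defs.v *)
From mathcomp Require Import all_boot all_order all_algebra.
From mathcomp Require Import all_classical all_reals all_analysis.
From mathcomp Require Import measurable_realfun.
Set Implicit Arguments. Unset Strict Implicit. Unset Printing Implicit Defensive.
Import Order.TTheory GRing.Theory Num.Theory.
Local Open Scope ring_scope.
Local Open Scope ereal_scope.

Section ESBAS_defs.
Context {R : realType}.

Definition emax (K : nat) (m : 'I_K -> \bar R) : \bar R :=
  \big[maxe/-oo]_(a < K) m a.

Definition egap (K : nat) (m : 'I_K -> \bar R) (k : 'I_K) : \bar R :=
  emax m - m k.

Definition min_pos_gap (K : nat) (m : 'I_K -> \bar R) (Dl : R) : Prop :=
  (0 < Dl)%R /\ (exists k, egap m k = Dl%:E) /\
  (forall k, egap m k = 0 \/ Dl%:E <= egap m k).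

(** A (randomized, history dependent) K-armed bandit algorithm:
    given the history of (arm, reward) pairs of the current run
    (most recent first), the probability of pulling each arm next. *)
Definition bandit_alg (K : nat) := seq ('I_K * R) -> 'I_K -> R.

Definition is_bandit_alg (K : nat) (Xi : bandit_alg K) : Prop :=
  (forall h k, (0 <= Xi h k)%R) /\ (forall h, (\sum_(k < K) Xi h k)%R = 1%R) /\
  (forall (s : nat) (a : s.-tuple 'I_K) (k : 'I_K),
      measurable_fun setT (fun r : s.-tuple R => Xi (zip a r) k)).

Definition mean (nu : probability R R) : \bar R := \int[nu]_x x%:E.

(** pseudo-regret E[sum_{t=1}^n (mu* - mu_{I_t})] of Xi on the stochastic bandit
    nu (arm k has reward distribution nu k), started from history h. *)
Fixpoint bandit_regret_from (K : nat) (Xi : bandit_alg K)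
    (nu : 'I_K -> probability R R) (n : nat) (h : seq ('I_K * R)) : \bar R :=
  match n with
  | 0 => 0
  | n'.+1 => \sum_(k < K) (Xi h k)%:E *
      (egap (fun a => mean (nu a)) k +
       \int[nu k]_x bandit_regret_from Xi nu n' ((k, x) :: h))
  end.

Definition bandit_pseudo_regret (K : nat) (Xi : bandit_alg K)
    (nu : 'I_K -> probability R R) (T : nat) : \bar R :=
  bandit_regret_from Xi nu T [::].

Definition log_regret_guarantee (K : nat) (Xi : bandit_alg K) (lo hi : R) : Prop :=
  exists (C : R) (T0 : nat), forall nu : 'I_K -> probability R R,
    (forall k, nu k `[lo, hi]%classic = 1) ->
    forall T : nat, (T0 <= T)%N ->
    forall Dl : R, min_pos_gap (fun a => mean (nu a)) Dl ->
      bandit_pseudo_regret Xi nu T <= (C * ln T%:R / Dl)%:E.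

Section RL.
Context {d : measure_display} {Tr : measurableType d} {K : nat}.

(** gen a D : law of the trajectory generated by the policy pi^a_D
    (algorithm a trained on the trajectory set D) in the environment *)
Definition expected_return (gen : 'I_K -> seq Tr -> probability Tr R)
    (ret : Tr -> R) (a : 'I_K) (D : seq Tr) : \bar R :=
  \int[gen a D]_e (ret e)%:E.

(** epoch of meta-time tau >= 1: 2^beta <= tau < 2^(beta+1) *)
Definition epoch_of (tau : nat) : nat := trunc_log 2 tau.

(** ESBAS expected short-sighted regret accumulated over the next n meta-times,
    when D (most recent first) is the current trajectory set D_{tau-1}
    and A the algorithms selected so far (most recent first). *)
Fixpoint esbas_regret_from (gen : 'I_K -> seq Tr -> probability Tr R)
    (ret : Tr -> R) (Xi : bandit_alg K) (n : nat) (D : seq Tr) (A : seq 'I_K)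
    : \bar R :=
  match n with
  | 0 => 0
  | n'.+1 =>
      let beta := epoch_of (size D).+1 in
      let s := (size D - (2 ^ beta).-1)%N in
      let F := drop s D in                          (* D_{2^beta - 1} *)
      let h := zip (take s A) (map ret (take s D)) in (* history of the fresh Ξ *)
      \sum_(k < K) (Xi h k)%:E *
        (egap (fun a => expected_return gen ret a F) k +
         \int[gen k F]_e esbas_regret_from gen ret Xi n' (e :: D) (k :: A))
  end.

Definition esbas_ss_pseudo_regret (gen : 'I_K -> seq Tr -> probability Tr R)
    (ret : Tr -> R) (Xi : bandit_alg K) (T : nat) : \bar R :=
  esbas_regret_from gen ret Xi T [::] [::].

End RL.
End ESBAS_defs.

(* Main.v *)
Require Import Defs.
From mathcomp Require Import all_boot all_order all_algebra.
From mathcomp Require Import all_classical all_reals all_analysis.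
From mathcomp Require Import measurable_realfun.
From mathcomp Require Import lra zify ring.
Import Order.TTheory GRing.Theory Num.Theory.
Local Open Scope ring_scope.
Local Open Scope ereal_scope.

Lemma le_integral_nm {R : realType} {d'} {T : measurableType d'} (mu : measure T R)
  (f g : T -> \bar R) : (forall x, 0 <= f x) -> (forall x, f x <= g x) ->
  \int[mu]_x f x <= \int[mu]_x g x.
Proof.
move=> f0 fg; have g0 x : 0 <= g x by exact: le_trans (f0 x) (fg x).
rewrite !ge0_integralTE //; apply: ereal_sup_le => _ [h hf <-].
by exists h => // x; exact: le_trans (hf x) (fg x).
Qed.

Lemma integral_cst_prob {R : realType} {d'} {T : measurableType d'} (P : probability T R) (c : \bar R) :
  \int[P]_x c = c.
Proof.
rewrite (integral_cst P measurableT) -[RHS]mule1; congr (_ * _).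
exact: probability_setT.
Qed.

Lemma bounded_integrable {R : realType} {d'} {T : measurableType d'} (P : probability T R)
  {f : T -> R} {lo hi : R} : measurable_fun setT f -> (forall x, (lo <= f x <= hi)%R) ->
  P.-integrable setT (EFin \o f).
Proof.
move=> mf fb; apply: measurable_bounded_integrable => //.
  by apply: (le_lt_trans _ (ltry 1%R)); rewrite le_eqVlt; apply/orP; left; apply/eqP; exact: probability_setT.
exists (`|lo| + `|hi|)%R; split; first by rewrite realE addr_ge0.
move=> M HM x _ /=; apply: le_trans (ltW HM).
have := fb x; move=> /andP[h1 h2].
rewrite ler_norml; apply/andP; split.
  have := ler_norm (- lo)%R; rewrite normrN; have := normr_ge0 hi.
  move=> *; lra.
have := ler_norm hi; have := normr_ge0 lo; move=> *; lra.
Qed.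

Lemma emax_real {R : realType} {K : nat} (HK : (0 < K)%N) (v : 'I_K -> R) :
  exists a0, emax (fun a => (v a)%:E) = (v a0)%:E /\ forall a, (v a <= v a0)%R.
Proof.
case: (@arg_maxP _ _ _ (Ordinal HK) predT v) => // i _ Hi.
exists i; split; last by move=> a; exact: Hi.
apply/le_anti/andP; split.
  by apply: bigmax_le => [|a _]; rewrite ?leNye // lee_fin; exact: Hi.
exact: (le_bigmax _ (fun a => (v a)%:E) i).
Qed.

Lemma powR_add2 {R : realType} (L m : R) : (1 <= L)%R ->
  (L `^ (m + 2) = L `^ m * (L * L))%R.
Proof.
move=> L1; have L0 : L != 0%R by apply: lt0r_neq0; apply: lt_le_trans L1.
rewrite powRD; last by apply/implyP.
rewrite (_ : 2%R = 1 + 1)%R // powRD; last by apply/implyP.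
by rewrite powRr1 //; exact: le_trans ler01 L1.
Qed.

Lemma final_arith {R : realType} (x ci K0 m L a Nr : R) :
  (0 <= x)%R -> (0 < ci)%R -> (0 <= K0)%R -> (0 <= m)%R -> (1 <= L)%R -> (0 <= a)%R ->
  (0 <= Nr)%R -> (Nr <= a * L)%R ->
  (Nr * (x * L * Nr `^ m * ci + K0) <= (x * a * a `^ m * ci + a * K0) * L `^ (m + 2))%R.
Proof.
move=> x0 ci0 K00 m0 L1 a0 N0 NaL.
have L0 : (0 <= L)%R by apply: le_trans L1.
have Pm : (1 <= L `^ m)%R by rewrite -(powRr0 L); apply: ler_powR.
have Nm : (Nr `^ m <= a `^ m * L `^ m)%R.
  by rewrite -powRM //; apply: ge0_ler_powR; rewrite ?nnegrE ?mulr_ge0.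
rewrite powR_add2 //.
apply: (@le_trans _ _ ((a * L) * (x * L * (a `^ m * L `^ m) * ci + K0))%R).
  apply: ler_pM => //.
    by rewrite addr_ge0 // !mulr_ge0 ?powR_ge0 // ltW.
  rewrite lerD2r; apply: ler_wpM2r; first exact: ltW.
  by apply: ler_wpM2l => //; rewrite mulr_ge0.
have aK0 : (0 <= a * K0)%R by rewrite mulr_ge0.
have LL : (L <= L `^ m * (L * L))%R.
  rewrite -[X in (X <= _)%R]mul1r; apply: ler_pM => //.
  by rewrite -[X in (X <= _)%R]mul1r; apply: ler_pM.
have := ler_wpM2l aK0 LL.
have ha := powR_ge0 a m; have hL := powR_ge0 L m.
move=> H.
rewrite mulrDr mulrDl.
apply: lerD.
  by rewrite le_eqVlt; apply/orP; left; apply/eqP; ring.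
apply: le_trans H; rewrite le_eqVlt; apply/orP; left; apply/eqP; ring.
Qed.

Section Bandit.
Context (R : realType) (K : nat) (Xi : bandit_alg K) (HXi : @is_bandit_alg R K Xi)
  (nu : 'I_K -> probability R R).

Let g k := egap (fun a => mean (nu a)) k.
Let B := bandit_regret_from Xi nu.

Lemma Xi_ge0 h k : (0 <= Xi h k)%R.
Proof. by case: HXi => + _; apply. Qed.

Lemma Xi_sum h : (\sum_(k < K) Xi h k)%R = 1%R.
Proof. by case: HXi => _ [+ _]; apply. Qed.

Lemma B_ge0 (Hg : forall k, 0 <= g k) n h : 0 <= B n h.
Proof.
elim: n h => [|n IH] h //=.
apply: sume_ge0 => k _; apply: mule_ge0; first by rewrite lee_fin Xi_ge0.
by apply: adde_ge0; [exact: Hg | apply: integral_ge0 => x _; exact: IH].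
Qed.

Lemma B_le (c : R) (c0 : (0 <= c)%R) (Hg : forall k, 0 <= g k)
  (Hgl : forall k, g k <= c%:E) n h : B n h <= (n%:R * c)%:E.
Proof.
elim: n h => [|n IH] h /=; first by rewrite mul0r.
have H k : (Xi h k)%:E * (g k + \int[nu k]_x B n ((k, x) :: h)) <=
    (Xi h k)%:E * (n.+1%:R * c)%:E.
  apply: lee_wpmul2l; first by rewrite lee_fin Xi_ge0.
  rewrite -[n.+1]addn1 natrD mulrDl mul1r addrC EFinD; apply: leeD; last exact: Hgl.
  rewrite [X in _ <= X](_ : _ = \int[nu k]_x (n%:R * c)%:E); last by rewrite integral_cst_prob.
  by apply: le_integral_nm => x; [exact: B_ge0 | exact: IH].
apply: le_trans (lee_sum _ (fun k _ => H k)) _.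
by rewrite -ge0_sume_distrl ?sumEFin ?Xi_sum ?mul1e // => k _; rewrite lee_fin Xi_ge0.
Qed.

Lemma B_zero (Hg : forall k, g k = 0) n h : B n h = 0.
Proof.
elim: n h => [|n IH] h //=.
apply: big1 => k _.
have -> : egap (fun a => mean (nu a)) k = 0 := Hg k.
rewrite add0e (_ : \int[nu k]_x _ = 0) ?mule0 //.
by apply: integral0_eq => x _; exact: IH.
Qed.

Lemma B_meas (Hg : forall k, 0 <= g k) n : forall s (a : s.-tuple 'I_K),
  measurable_fun setT (fun r : s.-tuple R => B n (zip a r)).
Proof.
elim: n => [|n IH] s a; first exact: measurable_cst.
have -> : (fun r : s.-tuple R => B n.+1 (zip a r)) = (fun r => \sum_(k < K)
   (Xi (zip a r) k)%:E * (g k + \int[nu k]_x B n ((k,x) :: zip a r))) by [].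
apply: emeasurable_sum => k.
apply: emeasurable_funM.
  by apply/measurable_EFinP; case: HXi => _ [_ +]; apply.
apply: emeasurable_funD; first exact: measurable_cst.
set f := (fun p : s.-tuple R * R => B n (zip [tuple of k :: a] [tuple of p.2 :: p.1])).
have -> : (fun r : s.-tuple R => \int[nu k]_y B n ((k, y) :: zip a r)) = fubini_F (nu k) f by [].
apply: (@measurable_fun_fubini_tonelli_F _ _ _ _ _ (nu k) f).
  exact: (measurableT_comp (IH _ [tuple of k :: a]) (measurable_cons measurable_snd measurable_fst)).
by move=> p; exact: B_ge0.
Qed.

Lemma B_meas1 (Hg : forall k, 0 <= g k) n k h :
  measurable_fun setT (fun x : R => B n ((k, x) :: h)).
Proof.
pose a := map_tuple fst (in_tuple h); pose r0 := map_tuple snd (in_tuple h).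
rewrite (_ : (fun x => _) = (fun r => B n (zip [tuple of k :: a] r)) \o
   (fun x : R => [tuple of x :: r0])); last first.
  by apply/funext => x /=; rewrite zip_unzip.
exact: (measurableT_comp (B_meas Hg n _ [tuple of k :: a]) (@measurable_cons _ _ _ _ (fun x : R => x) _ (fun=> r0) (@measurable_id _ _ setT) (measurable_cst _))).
Qed.

Lemma BS n h : B n.+1 h = \sum_(k < K) (Xi h k)%:E *
  (egap (fun a => mean (nu a)) k + \int[nu k]_x B n ((k, x) :: h)).
Proof. by []. Qed.

Lemma sum_addL h (y : 'I_K -> \bar R) (L : R) : (0 <= L)%R -> (forall k, 0 <= y k) ->
  \sum_(k < K) (Xi h k)%:E * y k + L%:E = \sum_(k < K) (Xi h k)%:E * (y k + L%:E).
Proof.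
move=> L0 y0; under [RHS]eq_bigr => k _ do rewrite ge0_muleDr ?lee_fin //.
rewrite big_split /=; congr (_ + _).
by rewrite -ge0_sume_distrl ?sumEFin ?Xi_sum ?mul1e // => k _; rewrite lee_fin Xi_ge0.
Qed.

End Bandit.

Section Main2.
Context (R : realType) (d : measure_display) (Tr : measurableType d) (K : nat)
  (HK : (0 < K)%N)
  (lo hi : R) (ret : Tr -> R) (ret_meas : measurable_fun setT ret)
  (ret_bd : forall e, (lo <= ret e <= hi)%R)
  (gen : 'I_K -> seq Tr -> probability Tr R)
  (Xi : @bandit_alg R K) (HXi : @is_bandit_alg R K Xi).

Lemma er_bd a F : exists r, expected_return gen ret a F = r%:E /\ (lo <= r <= hi)%R.
Proof.
set P := gen a F.
have iP : P.-integrable setT (EFin \o ret) := bounded_integrable P ret_meas ret_bd.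
have ic (c : R) : P.-integrable setT (EFin \o cst c).
  by apply: (@bounded_integrable _ _ _ P (cst c) c c (measurable_cst c)) => x; rewrite /= lexx.
have h1 : lo%:E <= expected_return gen ret a F.
  rewrite -(integral_cst_prob P lo%:E) /expected_return.
  apply: (le_integral measurableT (ic lo) iP) => x _; rewrite lee_fin; by case/andP: (ret_bd x).
have h2 : expected_return gen ret a F <= hi%:E.
  rewrite -(integral_cst_prob P hi%:E) /expected_return.
  apply: (le_integral measurableT iP (ic hi)) => x _; rewrite lee_fin; by case/andP: (ret_bd x).
move: h1 h2; case: (expected_return gen ret a F) => [r| |] //= h1 h2.
by exists r; rewrite -!lee_fin h1 h2.
Qed.


Definition vF F a := fine (expected_return gen ret a F).

Lemma erE F a : expected_return gen ret a F = (vF F a)%:E.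
Proof. by rewrite /vF; have [r [-> _]] := er_bd a F. Qed.

Lemma vF_bd F a : (lo <= vF F a <= hi)%R.
Proof. by rewrite /vF; have [r [-> H]] := er_bd a F. Qed.

Lemma gap_bd F k : 0 <= egap (fun a => expected_return gen ret a F) k <= (hi - lo)%:E.
Proof.
rewrite /egap (_ : (fun a => _) = (fun a => (vF F a)%:E)); last first.
  by apply/funext => a; rewrite erE.
have [a0 [-> H]] := emax_real HK (vF F).
rewrite /= erE -EFinB !lee_fin subr_ge0 H /=.
have := vF_bd F a0; have := vF_bd F k; move=> /andP[? ?] /andP[? ?]; lra.
Qed.

Lemma gap_ge0 F k : 0 <= egap (fun a => expected_return gen ret a F) k.
Proof. by case/andP: (gap_bd F k). Qed.

Let RET : {mfun Tr >-> R} := mfun_Sub (mem_set ret_meas).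

Definition nuF F k : probability R R := distribution (gen k F) RET.

Lemma mean_nu F a : mean (nuF F a) = expected_return gen ret a F.
Proof.
rewrite /mean /nuF integral_distribution //.
exact: (bounded_integrable (gen a F) ret_meas ret_bd).
Qed.

Lemma mean_nuE F : (fun a => mean (nuF F a)) = (fun a => expected_return gen ret a F).
Proof. by apply/funext => a; exact: mean_nu. Qed.

Lemma nu_int F k (G : R -> \bar R) : measurable_fun setT G -> (forall x, 0 <= G x) ->
  \int[nuF F k]_x G x = \int[gen k F]_e G (ret e).
Proof. by move=> mG G0; rewrite /nuF ge0_integral_distribution. Qed.

Lemma nu_supp F k : nuF F k `[lo, hi]%classic = 1.
Proof.
rewrite /nuF /distribution /pushforward.
transitivity (gen k F setT); last exact: probability_setT.
rewrite /=; congr (gen k F _).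
by apply/seteqP; split => // e _ /=; rewrite in_itv /= ret_bd.
Qed.



Local Notation Phi := (esbas_regret_from gen ret Xi).

Lemma PhiS n D A : Phi n.+1 D A =
  \sum_(k < K) (Xi (zip (take (size D - (2 ^ epoch_of (size D).+1).-1) A)
        (map ret (take (size D - (2 ^ epoch_of (size D).+1).-1) D))) k)%:E *
   (egap (fun a => expected_return gen ret a (drop (size D - (2 ^ epoch_of (size D).+1).-1) D)) k +
    \int[gen k (drop (size D - (2 ^ epoch_of (size D).+1).-1) D)]_e Phi n (e :: D) (k :: A)).
Proof. by []. Qed.

Lemma Phi_ge0 n D A : 0 <= Phi n D A.
Proof.
elim: n D A => [|n IH] D A //; rewrite PhiS.
apply: sume_ge0 => k _; apply: mule_ge0; first by rewrite lee_fin Xi_ge0.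
by apply: adde_ge0; [exact: gap_ge0 | apply: integral_ge0 => e _; exact: IH].
Qed.

Lemma gapnu_ge0 F k : 0 <= egap (fun a => mean (nuF F a)) k.
Proof. by rewrite mean_nuE; exact: gap_ge0. Qed.

Lemma Bge0 F n h : 0 <= bandit_regret_from Xi (nuF F) n h.
Proof. exact: (@B_ge0 R K Xi HXi (nuF F) (gapnu_ge0 F) n h). Qed.

Lemma Bmeas1 F n k h : measurable_fun setT (fun x : R => bandit_regret_from Xi (nuF F) n ((k, x) :: h)).
Proof. exact: (@B_meas1 R K Xi HXi (nuF F) (gapnu_ge0 F) n k h). Qed.

Lemma epoch_step b (L : R) (L0 : (0 <= L)%R) : forall n j D A,
  (0 < j)%N -> (j <= 2 ^ b)%N -> size D = (2 ^ b.+1 - 1 - j)%N ->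
  (forall D' A', size D' = (2 ^ b.+1 - 1)%N -> Phi (n - j) D' A' <= L%:E) ->
  Phi n D A <= bandit_regret_from Xi (nuF (drop (size D - (2 ^ b).-1) D)) (minn n j)
     (zip (take (size D - (2 ^ b).-1) A) (map ret (take (size D - (2 ^ b).-1) D))) + L%:E.
Proof.
elim=> [|n IH] j D A j0 jb sD HL.
  by rewrite min0n /= add0e lee_fin.
have pb : (0 < 2 ^ b)%N by rewrite expn_gt0.
have Hep : epoch_of (size D).+1 = b.
  rewrite /epoch_of; apply: trunc_log_eq => //; rewrite expnS in sD *.
  apply/andP; split; lia.
rewrite PhiS Hep.
set s := (size D - (2 ^ b).-1)%N.
set F := drop s D.
set h := zip (take s A) (map ret (take s D)).
have sDs : size D = (s + (2 ^ b).-1)%N by rewrite /s expnS in sD *; lia.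
case: (ltnP 1 j) => j1.
-
  have -> : minn n.+1 j = (minn n j.-1).+1 by rewrite -minnSS prednK ?(ltnW j1).
  rewrite BS sum_addL //; last first.
    by move=> k; apply: adde_ge0; [exact: gapnu_ge0 | apply: integral_ge0 => x _; exact: Bge0].
  apply: lee_sum => k _; apply: lee_wpmul2l; first by rewrite lee_fin Xi_ge0.
  rewrite mean_nuE -[X in _ <= X]addeA; apply: leeD; first exact: le_refl.
  have IHk e : Phi n (e :: D) (k :: A) <=
      bandit_regret_from Xi (nuF F) (minn n j.-1) ((k, ret e) :: h) + L%:E.
    have := IH j.-1 (e :: D) (k :: A).
    have -> : (size (e :: D) - (2 ^ b).-1 = s.+1)%N by rewrite /= sDs; lia.
    apply => //.
    + by rewrite -ltnS prednK ?(ltnW j1).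
    + by apply: leq_trans (leq_pred _) jb.
    + by rewrite /= sD expnS; lia.
    + by move=> D' A' sD'; rewrite (_ : (n - j.-1 = n.+1 - j)%N); [exact: HL | lia].
  apply: (le_trans (le_integral_nm (gen k F) _ (fun e => bandit_regret_from Xi (nuF F) (minn n j.-1) ((k, ret e) :: h) + L%:E) (fun e => Phi_ge0 _ _ _) IHk)).
  rewrite ge0_integralD //.
  + rewrite integral_cst_prob nu_int //.
    * exact: Bmeas1.
    * by move=> x; exact: Bge0.
  + by move=> e _; exact: Bge0.
  + exact: (measurableT_comp (Bmeas1 _ _ _ _) ret_meas).
-
  have j1' : j = 1%N by lia.
  subst j.
  have -> : minn n.+1 1 = 1%N by lia.
  rewrite BS sum_addL //; last first.
    by move=> k; apply: adde_ge0; [exact: gapnu_ge0 | apply: integral_ge0 => x _; exact: Bge0].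
  apply: lee_sum => k _; apply: lee_wpmul2l; first by rewrite lee_fin Xi_ge0.
  rewrite mean_nuE -[X in _ <= X]addeA; apply: leeD; first exact: le_refl.
  apply: le_trans (_ : L%:E <= _).
    rewrite -[X in _ <= X](integral_cst_prob (gen k F) L%:E).
    apply: le_integral_nm => e; first exact: Phi_ge0.
    have := HL (e :: D) (k :: A); rewrite subSS subn0; apply; by rewrite /= sD expnS; lia.
  rewrite leeDr //; apply: integral_ge0 => x _; exact: Bge0.
Qed.

Lemma epochs (T : nat) (u : nat -> R) (u0 : forall i, (0 <= u i)%R)
  (Hb : forall b F m, size F = (2 ^ b).-1 -> (m <= 2 ^ b)%N -> (m <= T)%N ->
     bandit_regret_from Xi (nuF F) m [::] <= (u b)%:E) N :
  forall k b m D A, N = (b + k)%N -> size D = (2 ^ b).-1 -> (2 ^ b + m <= 2 ^ N)%N ->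
   (m <= T)%N -> Phi m D A <= (\sum_(b <= i < N) u i)%:E.
Proof.
elim=> [|k IH] b m D A HN sD Hm mT.
  rewrite addn0 in HN; subst N.
  have -> : m = 0%N by lia.
  by rewrite big_geq.
case: (posnP m) => [->|m0].
  by rewrite /= lee_fin sumr_ge0.
rewrite big_ltn; last by lia.
have pb : (0 < 2 ^ b)%N by rewrite expn_gt0.
have HbN : (2 ^ b.+1 <= 2 ^ N)%N by rewrite leq_exp2l //; lia.
have := @epoch_step b (\sum_(b.+1 <= i < N) u i) (sumr_ge0 _ (fun i _ => u0 i)) m (2 ^ b) D A pb (leqnn _).
rewrite sD subnn drop0 !take0 /= EFinD.
move=> H; apply: le_trans (H _ _) _.
- by rewrite expnS; lia.
- move=> D' A' sD'; apply: (IH b.+1) => //.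
  + by lia.
  + by rewrite sD'; lia.
  + by move: Hm HbN; rewrite expnS; lia.
  + by lia.
apply: leeD; last exact: le_refl.
apply: Hb => //; [exact: geq_minr | exact: leq_trans (geq_minl _ _) mT].
Qed.

Lemma hilo : (0 <= hi - lo)%R.
Proof.
have /andP[H1 H2] := gap_bd [::] (Ordinal HK).
by rewrite -lee_fin; exact: le_trans H1 H2.
Qed.

Lemma bandit_bound (C : R) (T0 : nat)
  (Hg : forall nu : 'I_K -> probability R R, (forall k, nu k `[lo, hi]%classic = 1) ->
    forall T : nat, (T0 <= T)%N -> forall Dl : R, min_pos_gap (fun a => mean (nu a)) Dl ->
    bandit_pseudo_regret Xi nu T <= (C * ln T%:R / Dl)%:E)
  (c1 mdag : R) (c1p : (0 < c1)%R) (b0 : nat)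
  (HD : forall b, (b0 <= b)%N -> forall F, size F = (2 ^ b).-1 ->
     forall Dl, min_pos_gap (fun a => expected_return gen ret a F) Dl ->
     (c1 * b%:R `^ (- mdag) <= Dl)%R)
  (T : nat) (T1 : (1 <= T)%N) b F m (sF : size F = (2 ^ b).-1) (mb : (m <= 2 ^ b)%N)
  (mT : (m <= T)%N) :
  bandit_regret_from Xi (nuF F) m [::] <=
  (Num.max C 0 * ln T%:R * b%:R `^ mdag / c1 + (T0 + 2 ^ (maxn b0 1))%:R * (hi - lo))%:E.
Proof.
have hl := hilo.
have lnT0 : (0 <= ln (T%:R : R))%R by apply: ln_ge0; rewrite ler1n.
have x0 : (0 <= Num.max C 0)%R by rewrite le_max lexx orbT.
have rhs0 : (0 <= Num.max C 0 * ln T%:R * b%:R `^ mdag / c1)%R.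
  by rewrite !mulr_ge0 ?powR_ge0 // invr_ge0 ltW.
have rhs1 : (0 <= (T0 + 2 ^ (maxn b0 1))%:R * (hi - lo))%R by rewrite mulr_ge0.
pose w k := fine (egap (fun a => expected_return gen ret a F) k).
have wE k : egap (fun a => expected_return gen ret a F) k = (w k)%:E.
  by have := gap_bd F k; rewrite /w; case: (egap (fun a => expected_return gen ret a F) k) => [r| |] /andP[h1 h2] //.
have w0 k : (0 <= w k)%R by rewrite -lee_fin -wE; exact: gap_ge0.
have [Hz|Hnz] := pselect (forall k, egap (fun a => expected_return gen ret a F) k = 0).
  rewrite (@B_zero R K Xi (nuF F)); first by rewrite lee_fin addr_ge0.
  by move=> k; rewrite mean_nuE; exact: Hz.
move/existsNP: Hnz => [k0 Hk0].
have wk0 : w k0 != 0%R by apply/eqP => e; apply: Hk0; rewrite wE e.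
case: (@arg_minP _ _ _ k0 (fun i => w i != 0%R) w wk0) => i Hi Hmin.
have mpg : min_pos_gap (fun a => expected_return gen ret a F) (w i).
  split; first by rewrite lt_def Hi w0.
  split; first by exists i; exact: wE.
  move=> k; case: (eqVneq (w k) 0%R) => [wk|wk].
    by left; rewrite wE wk.
  by right; rewrite wE lee_fin; exact: Hmin.
case: (boolP ((maxn b0 1 <= b)%N && (T0 <= m)%N)) => [/andP[bb Tm]|hb].
- have := Hg (nuF F) (nu_supp F) m Tm (w i).
  rewrite mean_nuE => /(_ mpg) H.
  rewrite /bandit_pseudo_regret in H; apply: le_trans H _; rewrite lee_fin.
  apply: (@le_trans _ _ (Num.max C 0 * ln T%:R * b%:R `^ mdag / c1)%R); last by rewrite lerDl.
  have b1 : (1 <= b)%N by move: bb; rewrite geq_max => /andP[].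
  have pp : (0 < b%:R `^ mdag)%R by rewrite powR_gt0 // ltr0n.
  have HDl := HD b (leq_trans (leq_maxl _ _) bb) F sF (w i) mpg.
  rewrite powRN in HDl.
  have wip : (0 < w i)%R by rewrite lt_def Hi w0.
  have key : ((w i)^-1 <= b%:R `^ mdag / c1)%R.
    rewrite -[X in (_ <= X)%R]invrK invf_div lef_pV2 ?posrE ?divr_gt0 //.
  have lnm : (C * ln m%:R <= Num.max C 0 * ln T%:R)%R.
    have lnm0 : (0 <= ln (m%:R : R))%R.
      case: (posnP m) => [->|mp]; first by rewrite ln0.
      by apply: ln_ge0; rewrite ler1n.
    apply: le_trans (_ : Num.max C 0 * ln m%:R <= _)%R.
      by apply: ler_wpM2r => //; rewrite le_max lexx.
    apply: ler_wpM2l => //.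
    case: (posnP m) => [->|mp]; first by rewrite ln0.
    by rewrite ler_ln ?posrE ?ltr0n ?ler_nat //; lia.
  case: (lerP (C * ln m%:R) 0) => hC.
    apply: (@le_trans _ _ 0%R) => //.
    by rewrite mulr_le0_ge0 // invr_ge0 ltW.
  rewrite -[X in (_ <= X)%R]mulrA; apply: ler_pM => //.
  + exact: ltW.
  + by rewrite invr_ge0 ltW.
- apply: le_trans (@B_le R K Xi HXi (nuF F) (hi - lo) hl _ _ m [::]) _.
  + by move=> k; exact: gapnu_ge0.
  + by move=> k; rewrite mean_nuE; case/andP: (gap_bd F k).
  + rewrite lee_fin; apply: (@le_trans _ _ ((T0 + 2 ^ (maxn b0 1))%:R * (hi - lo))%R); last by rewrite lerDr.
    apply: ler_wpM2r => //; rewrite ler_nat.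
    move: hb; rewrite negb_and -!ltnNge => /orP[hb|hb].
      apply: leq_trans mb _; apply: leq_trans (leq_addl _ _).
      by rewrite leq_exp2l //; lia.
    by lia.
Qed.
End Main2.

Theorem corollary2 (R : realType) (d : measure_display) (Tr : measurableType d)
  (K : nat) (HK : (0 < K)%N)
  (lo hi : R) (ret : Tr -> R)
  (ret_meas : measurable_fun setT ret)
  (ret_bd : forall e, (lo <= ret e <= hi)%R)
  (gen : 'I_K -> seq Tr -> probability Tr R)
  (gen_meas : forall (n : nat) (a : 'I_K) (B : set Tr), measurable B ->
      measurable_fun setT (fun D : n.-tuple Tr => gen a D B))
  (Xi : bandit_alg K) (HXi : is_bandit_alg Xi)
  (Hguar : log_regret_guarantee Xi lo hi)
  (mdag : R) (Hm : (0 < mdag)%R)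
  (HDelta : exists (c1 c2 : R) (beta0 : nat), (0 < c1)%R /\ (0 < c2)%R /\
      forall beta : nat, (beta0 <= beta)%N ->
      forall F : seq Tr, size F = (2 ^ beta).-1 ->
      forall Dl : R, min_pos_gap (fun a => expected_return gen ret a F) Dl ->
        (c1 * beta%:R `^ (- mdag) <= Dl <= c2 * beta%:R `^ (- mdag))%R) :
  exists (C : R) (T1 : nat), forall T : nat, (T1 <= T)%N ->
    esbas_ss_pseudo_regret gen ret Xi T <= (C * (ln T%:R) `^ (mdag + 2))%:E.
Proof.
case: Hguar => C [T0 Hg].
case: HDelta => c1 [c2 [b0 [c1p [c2p HD]]]].
have HD' : forall b, (b0 <= b)%N -> forall F, size F = (2 ^ b).-1 ->
    forall Dl, min_pos_gap (fun a => expected_return gen ret a F) Dl ->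
    (c1 * b%:R `^ (- mdag) <= Dl)%R.
  by move=> b hb F sF Dl mp; case/andP: (HD b hb F sF Dl mp).
have hl : (0 <= hi - lo)%R := @hilo R d Tr K HK lo hi ret ret_meas ret_bd gen.
set x := Num.max C 0%R.
have x0 : (0 <= x)%R by rewrite le_max lexx orbT.
set K0 := ((T0 + 2 ^ maxn b0 1)%:R * (hi - lo))%R.
have K00 : (0 <= K0)%R by rewrite mulr_ge0.
have ln2p : (0 < ln (2:R))%R by apply: ln_gt0; lra.
set a := ((ln (2:R))^-1 + 1)%R.
have a0 : (0 <= a)%R by rewrite addr_ge0 // invr_ge0 ltW.
have [n0 hn0] : exists n0 : nat, (expR 1 <= n0%:R :> R)%R.
  exists (Num.Def.archi_bound (expR (1:R))); apply: ltW.
  by apply: Num.Theory.archi_boundP; exact: expR_ge0.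
exists (x * a * a `^ mdag * c1^-1 + a * K0)%R, (maxn n0 1).
move=> T HT.
have T1 : (0 < T)%N by move: HT; rewrite geq_max => /andP[].
have Tn0 : (n0 <= T)%N by move: HT; rewrite geq_max => /andP[].
set L := ln (T%:R : R).
have L1 : (1 <= L)%R.
  apply: (@le_trans _ _ (ln (expR (1:R)))); first by rewrite expRK.
  rewrite /L ler_ln ?posrE ?expR_gt0 ?ltr0n //.
  by apply: le_trans hn0 _; rewrite ler_nat.
have L0 : (0 <= L)%R by apply: le_trans L1.
set N := (trunc_log 2 T).+1.
pose u i := (x * L * i%:R `^ mdag / c1 + K0)%R.
have u0 i : (0 <= u i)%R.
  by rewrite /u addr_ge0 // !mulr_ge0 ?powR_ge0 // invr_ge0 ltW.
have Hb b F m (sF : size F = (2 ^ b).-1) (mb : (m <= 2 ^ b)%N) (mT : (m <= T)%N) :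
    bandit_regret_from Xi (nuF R d Tr K ret ret_meas gen F) m [::] <= (u b)%:E.
  exact: (@bandit_bound R d Tr K HK lo hi ret ret_meas ret_bd gen Xi HXi C T0 Hg c1 mdag c1p b0 HD' T T1 b F m sF mb mT).
have H := @epochs R d Tr K HK lo hi ret ret_meas ret_bd gen Xi HXi T u u0 Hb N N 0 T [::] [::]
  (esym (add0n _)) erefl.
rewrite /esbas_ss_pseudo_regret; apply: le_trans (H _ (leqnn T)) _.
  by rewrite expn0 add1n; exact: trunc_log_ltn.
rewrite lee_fin.
apply: (@le_trans _ _ (\sum_(0 <= i < N) (x * L * N%:R `^ mdag / c1 + K0))%R).
  rewrite big_nat [X in (_ <= X)%R]big_nat; apply: ler_sum => i /andP[_ iN].
  rewrite /u lerD2r; apply: ler_wpM2r; first by rewrite invr_ge0 ltW.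
  apply: ler_wpM2l; first by rewrite mulr_ge0.
  apply: ge0_ler_powR; rewrite ?nnegrE ?ler0n ?ler_nat //; [exact: ltW | exact: ltnW].
rewrite sumr_const_nat subn0 -(mulr_natl (x * L * N%:R `^ mdag / c1 + K0)).
apply: final_arith => //; [by rewrite invr_gt0 | exact: ltW | ].
have tl := trunc_logP (isT : (1 < 2)%N) T1.
have h1 : ((trunc_log 2 T)%:R * ln (2:R) <= L)%R.
  rewrite mulr_natl -lnXn; last lra.
  rewrite /L ler_ln ?posrE ?exprn_gt0 ?ltr0n // -natrX ler_nat //.

have il : (ln (2:R) * (ln (2:R))^-1 = 1)%R by rewrite mulfV // lt0r_neq0.
have ilp : (0 < (ln (2:R))^-1)%R by rewrite invr_gt0.
have h2 : ((trunc_log 2 T)%:R <= L * (ln (2:R))^-1)%R.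
  by rewrite ler_pdivlMr.
rewrite /N -addn1 natrD /a; lra.
Qed.
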